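(* Let $q$ be a positive integer and $\lambda$ be a partition. Then \[c^{(q)}_\lambda=\left|\mathscr{W}^{(q)}_{r(\lambda)}\right|\cdot\frac{\prod_{i=0}^{q-1}r_i(\lambda)!}{\prod_{s\geq1}n_s(\lambda)!}\cdot\binom{\ell(\lambda)-1}{r_0(\lambda)}.\] In particular, $c^{(q)}_\lambda\neq0$ if and only if $\mathscr{W}^{(q)}_{r(\lambda)}\neq\emptyset$.
   Context: A composition of $n\in\mathbb{N}_0$ is a finite sequence $\delta=(\delta_1,\ldots,\delta_s)$ of positive integers with $\sum_i\delta_i=n$; write $\ell(\delta)=s$, $|\delta|=n$; the unique composition of $0$ is the empty composition. A partition is a composition with $\delta_1\geq\cdots\geq\delta_s$. Partial sums: $\delta^+_j=\sum_{i=1}^j\delta_i$. For a positive integer $d$, $n_d(\delta)=|\{i:\delta_i=d\}|$. For a positive integer $q$, a composition $\delta$ is called $q'$-cumulative if it is nonempty and $q\nmid\delta^+_j$ for all $1\leq j\leq\ell(\delta)$ (the empty composition is not regarded as $q'$-cumulative). For a partition $\lambda$, $\mathscr{C}(\lambda)$ is the set of compositions that are rearrangements of $\lambda$, and $c^{(q)}_\lambda$ is the number of $q'$-cumulative $\delta\in\mathscr{C}(\lambda)$. For $0\leq j\leq q-1$, $r_j(\delta)=\sum_{i\equiv j\,(\mathrm{mod}\ q)}n_i(\delta)$, and $r(\delta)=(r_1(\delta),\ldots,r_{q-1}(\delta))\in\mathbb{N}_0^{q-1}$. For $\mathbf{r}=(r_1,\ldots,r_{q-1})\in\mathbb{N}_0^{q-1}$,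 let $\mu$ be the partition $((q-1)^{r_{q-1}},\ldots,2^{r_2},1^{r_1})$ (having $r_i$ parts equal to $i$) and $\mathscr{W}^{(q)}_{\mathbf{r}}=\{\delta\in\mathscr{C}(\mu):\delta\text{ is }q'\text{-cumulative}\}$. The binomial coefficient $\binom{m}{k}$ is $0$ when $k>m\ge 0$. *)

(* Defs.v *)
From mathcomp Require Import all_boot all_order all_algebra.
Set Implicit Arguments. Unset Strict Implicit. Unset Printing Implicit Defensive.

Definition is_composition (d : seq nat) : bool := all (fun x => 0 < x) d.

Definition is_partition (l : seq nat) : bool :=
  is_composition l && sorted geq l.

Definition psum (d : seq nat) (j : nat) : nat := sumn (take j d).

Definition nmult (d : seq nat) (x : nat) : nat := count_mem x d.

Definition qcumulative (q : nat) (d : seq nat) : bool :=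
  (d != [::]) && all (fun j => ~~ (q %| psum d j)) (iota 1 (size d)).

(* C(lambda): the (distinct) rearrangements of lambda *)
Definition rearrangements (l : seq nat) : seq (seq nat) := permutations l.

Definition cq (q : nat) (l : seq nat) : nat :=
  count (qcumulative q) (rearrangements l).

(* r_j(delta) = sum over i = j (mod q) of n_i(delta), for 0 <= j <= q-1 *)
Definition rj (q : nat) (d : seq nat) (j : nat) : nat :=
  count (fun x => x %% q == j) d.

Definition rvec (q : nat) (d : seq nat) : seq nat :=
  [seq rj q d j | j <- iota 1 q.-1].

(* mu(r) = ((q-1)^{r_{q-1}}, ..., 1^{r_1}), with r_i = nth 0 r (i-1) *)
Definition mu_of (q : nat) (r : seq nat) : seq nat :=
  flatten [seq nseq (nth 0 r i.-1) i | i <- rev (iota 1 q.-1)].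

Definition Wq (q : nat) (r : seq nat) : seq (seq nat) :=
  filter (qcumulative q) (rearrangements (mu_of q r)).

(* Main.v *)
Require Import Defs.
From mathcomp Require Import all_boot all_order all_algebra.
From mathcomp Require Import ring zify.
Set Implicit Arguments. Unset Strict Implicit. Unset Printing Implicit Defensive.

Section S.
Variable q : nat.

Definition okq (a : nat) (t : seq nat) : bool :=
  all (fun j => ~~ (q %| a + psum t j)) (iota 1 (size t)).

Lemma psum0 t : psum t 0 = 0. Proof. by rewrite /psum take0. Qed.
Lemma psumS x t j : psum (x :: t) j.+1 = x + psum t j. Proof. by []. Qed.

Lemma okq_nil a : okq a [::]. Proof. by []. Qed.

Lemma okq_cons a x t : okq a (x :: t) = ~~ (q %| a + x) && okq (a + x) t.
Proof.
rewrite /okq /= psumS psum0 addn0; congr andb.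
rewrite -(addn1 1) iotaDl all_map; apply: eq_all => j /=.
by rewrite add1n psumS addnA.
Qed.

Definition Fq a s := count (okq a) (permutations s).

Lemma Fq_nil a : Fq a [::] = 1. Proof. by []. Qed.

Lemma Fq_rec a s : 0 < size s ->
  Fq a s = \sum_(x <- undup s) (~~ (q %| a + x)) * Fq (a + x) (rem x s).
Proof.
move=> s0; rewrite /Fq (permP (permutationsE s0)).
rewrite /allpairs_dep count_flatten /sumn foldrE !big_map.
apply: eq_bigr => x _; rewrite count_map.
have -> : count (preim (cons x) (okq a)) (permutations (rem x s)) =
   count (fun t => ~~ (q %| a + x) && okq (a + x) t) (permutations (rem x s)).
  by apply: eq_count => t; rewrite /preim /= okq_cons.
case: (q %| a + x) => /=; first by rewrite mul0n; exact: count_pred0.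
by rewrite mul1n.
Qed.


Definition Wt N s := \prod_(0 <= v < N) (count_mem v s)`!.

Lemma count_mem_rem (x : nat) s v : x \in s ->
  count_mem v s = (x == v) + count_mem v (rem x s).
Proof. by move=> xs; rewrite (permP (perm_to_rem xs)). Qed.

Lemma Wt_rem N s (x : nat) : x \in s -> x < N -> Wt N s = count_mem x s * Wt N (rem x s).
Proof.
move=> xs xN; rewrite /Wt !big_mkord (bigD1 (Ordinal xN)) //=.
rewrite [in RHS](bigD1 (Ordinal xN)) //= mulnA.
congr (_ * _).
  by rewrite (count_mem_rem _ xs) eqxx add1n factS.
apply: eq_bigr => i ni; rewrite (count_mem_rem _ xs).
suff -> : (x == i) = false by rewrite add0n.
by apply/negbTE; apply: contra ni => /eqP xi; apply/eqP; apply: val_inj => /=.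
Qed.

Lemma Wt_nil N : Wt N [::] = 1.
Proof. by rewrite /Wt big1. Qed.

Fixpoint Gq n a (s : seq nat) : nat := if n is n'.+1 then
  \sum_(x <- s) (~~ (q %| a + x)) * Gq n' (a + x) (rem x s) else 1.

Lemma FW N n a s : size s = n -> all (fun x => x < N) s ->
  Fq a s * Wt N s = Gq n a s.
Proof.
elim: n a s => [|n IH] a s.
  by move/size0nil => -> _; rewrite Fq_nil Wt_nil.
move=> sz hall; rewrite Fq_rec ?sz // big_distrl /=.
rewrite -[in RHS]big_undup_iterop_count.
apply: eq_big_seq => x; rewrite mem_undup => xs.
rewrite Monoid.iteropE iter_addn_0.
have xN : x < N by move/allP: hall; apply.
rewrite (Wt_rem xs xN) -IH; last first.
- by apply/allP => y /mem_rem; move/allP: hall; apply.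
- by rewrite size_rem // sz.
by rewrite [count_mem _ _ * _]mulnC !mulnA.
Qed.


Lemma G_mod n a a' s : a = a' %[mod q] -> Gq n a s = Gq n a' s.
Proof.
elim: n a a' s => [|n IH] a a' s h //=.
apply: eq_bigr => x _.
have hx : a + x = a' + x %[mod q] by rewrite -modnDml h modnDml.
by rewrite /dvdn hx (IH _ _ _ hx).
Qed.

Lemma perm_rem (x : nat) s t : perm_eq s t -> perm_eq (rem x s) (rem x t).
Proof.
move=> h; apply/permP => P; rewrite !count_rem (permP h) (perm_mem h).
by [].
Qed.

Lemma G_perm n a s t : perm_eq s t -> Gq n a s = Gq n a t.
Proof.
elim: n a s t => [|n IH] a s t h //=.
rewrite (perm_big _ h) /=; apply: eq_bigr => x _.
by rewrite (IH _ _ _ (perm_rem x h)).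
Qed.

Lemma rem_map_perm (h : nat -> nat) (x : nat) s : x \in s ->
  perm_eq (rem (h x) (map h s)) (map h (rem x s)).
Proof.
move=> xs.
have := perm_rem (h x) (perm_map h (perm_to_rem xs)).
by rewrite /= eqxx.
Qed.

Lemma G_map n a s : Gq n a (map (fun x => x %% q) s) = Gq n a s.
Proof.
elim: n a s => [|n IH] a s //=.
rewrite big_map; apply: eq_big_seq => x xs.
have hx : a + x %% q = a + x %[mod q] by rewrite modnDmr.
rewrite /dvdn hx (G_perm _ _ (rem_map_perm _ xs)) IH.
by rewrite (G_mod _ _ hx).
Qed.


Definition G' a s := Gq (size s) a s.
Definition sp s := filter (fun x => ~~ (q %| x)) s.
Definition zc s := count (fun x => q %| x) s.

Lemma G'_rec a s : 0 < size s ->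
  G' a s = \sum_(x <- s) (~~ (q %| a + x)) * G' (a + x) (rem x s).
Proof.
rewrite /G'; case: s => // y s _ /=.
apply: eq_big_seq => x xs; congr (_ * _).
by have := size_rem xs; rewrite /= => ->.
Qed.

Lemma filter_rem_out (p : pred nat) x s : ~~ p x -> filter p (rem x s) = filter p s.
Proof.
move=> px; elim: s => //= y s IH; case: eqP => [->|_] /=.
  by rewrite (negbTE px).
by rewrite IH.
Qed.

Lemma filter_rem_in (p : pred nat) x s : p x -> filter p (rem x s) = rem x (filter p s).
Proof.
move=> px; elim: s => //= y s IH; case: eqP => [->|/eqP ne] /=.
  by rewrite px /= eqxx.
by case: (p y) => //=; rewrite (negbTE ne) IH.
Qed.

Lemma Tsum a t : \sum_(x <- t) (~~ (q %| a + x)) * G' (a + x) (rem x t)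
   = (t != [::]) * G' a t.
Proof.
case: t => [|y t]; first by rewrite big_nil.
by rewrite (G'_rec a (s := y :: t)) // mul1n.
Qed.

Lemma ff_pascal n z : n.+1 ^_ z = z * n ^_ z.-1 + n ^_ z.
Proof.
case: z => [|k] //=; rewrite ffactSS ffactnSr.
case: (leqP k n) => h.
  by rewrite [k.+1 * _]mulnC -mulnDr mulnC addSn subnKC.
by rewrite ffact_small // !muln0 mul0n.
Qed.

Lemma zc_sp s : zc s + size (sp s) = size s.
Proof. by rewrite /zc /sp size_filter count_predC. Qed.

Lemma NZpart n s a :
  (forall t a', size t = n -> ~~ (q %| a') -> G' a' t = G' a' (sp t) * n ^_ (zc t)) ->
  size s = n.+1 ->
  \sum_(x <- s | ~~ (q %| x)) (~~ (q %| a + x)) * G' (a + x) (rem x s)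
   = n ^_ (zc s) * ((sp s != [::]) * G' a (sp s)).
Proof.
move=> IH sz.
rewrite -Tsum big_distrr /= /sp big_filter.
rewrite big_seq_cond [RHS]big_seq_cond; apply: eq_bigr => x /andP[xs nx].
case bx: (q %| a + x); first by rewrite !mul0n muln0.
rewrite !mul1n IH ?size_rem ?sz //; last by rewrite bx.
rewrite -/(sp (rem x s)) /sp filter_rem_in //.
rewrite /zc count_rem xs /= (negbTE nx) subn0 mulnC.
reflexivity.
Qed.

Lemma Z1 n s a : size s = n -> ~~ (q %| a) ->
  G' a s = G' a (sp s) * n ^_ (zc s).
Proof.
elim: n s a => [|n IH] s a.
  by move/size0nil => -> _.
move=> sz na; rewrite G'_rec ?sz // (bigID (fun x => q %| x)) /=.
rewrite (NZpart _ IH sz).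
have -> : \sum_(x <- s | q %| x) (~~ (q %| a + x)) * G' (a + x) (rem x s)
    = \sum_(x <- s | q %| x) (G' a (sp s) * n ^_ (zc s).-1).
  rewrite big_seq_cond [RHS]big_seq_cond; apply: eq_bigr => x /andP[xs zx].
  rewrite dvdn_addl // na mul1n IH ?size_rem ?sz //; last by rewrite dvdn_addl.
  rewrite /sp filter_rem_out ?zx // -/(sp s).
  rewrite /zc count_rem xs zx subn1.
  congr (_ * _); apply: G_mod.
  by rewrite -modnDmr (eqP zx) addn0.
rewrite big_const_seq iter_addn_0 -/(zc s).
case: eqP => sp0 /=.
  have zs : zc s = n.+1 by rewrite -sz -(zc_sp s) sp0 addn0.
  by rewrite sp0 zs /= mul0n muln0 addn0 ffactSS mulnC mulnCA.
rewrite mul1n ff_pascal mulnDr; congr (_ + _); last by rewrite mulnC.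
by rewrite [zc s * _]mulnC mulnA.
Qed.

Lemma Z0 s a : q %| a -> 0 < size s ->
  G' a s = G' a (sp s) * (size s).-1 ^_ (zc s).
Proof.
move=> da; case sz: (size s) => [|n] // _.
rewrite G'_rec ?sz // (bigID (fun x => q %| x)) /=.
rewrite (NZpart (n := n)) //; last by move=> t a' st; apply: Z1.
rewrite big1; last by move=> x zx; rewrite dvdn_add.
rewrite add0n /=.
case: eqP => sp0 /=; last by rewrite mul1n mulnC.
have zs : zc s = n.+1 by rewrite -sz -(zc_sp s) sp0 addn0.
by rewrite zs ffact_small // mul0n muln0.
Qed.

End S.

Lemma perm_eq_countmem (s t : seq nat) :
  (forall v, count_mem v s = count_mem v t) -> perm_eq s t.
Proof. by move=> h; rewrite /perm_eq; apply/allP => x _; rewrite /= h. Qed.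

Lemma mu_count q l v : count_mem v (mu_of q (rvec q l)) =
  (0 < v < q) * rj q l v.
Proof.
rewrite /mu_of count_flatten /sumn foldrE !big_map big_rev.
rewrite (eq_big_seq (fun i => (i == v) * rj q l v)); last first.
  move=> i; rewrite mem_iota => /andP[i1 iq].
  case: i i1 iq => // k _; rewrite add1n ltnS => kq.
  rewrite count_nseq /rvec /= (nth_map 0) ?size_iota // nth_iota // add1n.
  by case: eqP => [->|].
rewrite -big_distrl /=.
have -> : \sum_(i <- iota 1 q.-1) (i == v) = count_mem v (iota 1 q.-1).
  by rewrite -sum1_count [RHS]big_mkcond; apply: eq_bigr => i _ /=; case: eqP.
rewrite count_uniq_mem ?iota_uniq // mem_iota.
case: q => [|q] /=; first by case: v.
by rewrite add1n.
Qed.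

Lemma sp_count q l v : 0 < q ->
  count_mem v (sp q (map (fun x => x %% q) l)) = (0 < v < q) * rj q l v.
Proof.
move=> q0; rewrite /sp count_filter count_map /rj.
case hv: (0 < v < q).
  rewrite mul1n; apply: eq_count => x /=; case: eqP => [->|] //=.
  by case/andP: hv => v0 vq; rewrite gtnNdvd.
rewrite mul0n; apply/eqP; rewrite -leqn0 leqNgt -has_count; apply/hasPn => x _ /=.
apply/negP => /andP[/eqP xv nd]; move: hv; rewrite -xv ltn_pmod //= andbT.
by move/negbT; rewrite lt0n negbK => /eqP h; move: nd; rewrite h dvdn0.
Qed.

Lemma pm q l : 0 < q -> perm_eq (sp q (map (fun x => x %% q) l)) (mu_of q (rvec q l)).
Proof. by move=> q0; apply: perm_eq_countmem => v; rewrite sp_count // mu_count. Qed.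

Lemma le_sumn (x : nat) s : x \in s -> x <= sumn s.
Proof.
elim: s => //= y s IH; rewrite inE => /orP[/eqP->|/IH h]; first exact: leq_addr.
exact: leq_trans h (leq_addl _ _).
Qed.

Lemma count_qcum q s : count (qcumulative q) (permutations s) = (s != [::]) * Fq q 0 s.
Proof.
case: s => [|y s] //; rewrite mul1n /Fq; apply: eq_in_count => t.
rewrite mem_permutations => pt.
have : size t = (size s).+1 by rewrite (perm_size pt).
by case: t pt => // z t _ _; rewrite /qcumulative /okq /=.
Qed.

Lemma key q l : 0 < q -> is_partition l ->
  cq q l * \prod_(1 <= s < (sumn l).+1) (nmult l s)`! =
  size (Wq q (rvec q l)) * \prod_(0 <= i < q) (rj q l i)`! * 'C((size l).-1, rj q l 0).
Proof.
move=> q0 /andP[lc _].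
set L' := map (fun x => x %% q) l; set mu := mu_of q (rvec q l).
have hpm : perm_eq (sp q L') mu by apply: pm.
have W1 : \prod_(1 <= s < (sumn l).+1) (nmult l s)`! = Wt (sumn l).+1 l.
  rewrite /Wt [RHS]big_ltn //.
  have -> : count_mem 0 l = 0.
    apply/count_memPn; apply/negP => l0.
    by move/allP: lc => /(_ 0 l0).
  by rewrite mul1n.
have WP : \prod_(0 <= i < q) (rj q l i)`! = (rj q l 0)`! * Wt q mu.
  rewrite /Wt big_ltn // [in RHS]big_ltn // mu_count /= mul0n mul1n.
  congr (_ * _); apply: eq_big_nat => i /andP[i1 iq].
  by rewrite mu_count i1 iq mul1n.
have hzc : zc q L' = rj q l 0.
  rewrite /zc /rj count_map; apply: eq_count => x /=.
  by rewrite /dvdn modn_mod.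
have hsz : size (Wq q (rvec q l)) = (mu != [::]) * Fq q 0 mu.
  by rewrite /Wq size_filter count_qcum.
have hsp : zc q L' + size mu = size l.
  by rewrite -(perm_size hpm) zc_sp size_map.
case: l lc @L' @mu hpm W1 WP hzc hsz hsp => [|y l] lc L' mu hpm W1 WP hzc hsz hsp.
  have mu0 : mu = [::] by apply/perm_nilP; rewrite perm_sym.
  by rewrite hsz mu0.
rewrite /cq /rearrangements count_qcum mul1n W1.
rewrite (@FW q _ (size (y :: l))) //; last first.
  by apply/allP => x /le_sumn.
rewrite -G_map -/L'.
have -> : Gq q (size (y::l)) 0 L' = G' q 0 L' by rewrite /G' /L' size_map.
rewrite Z0 ?dvdn0 ?size_map //.
rewrite /G' (perm_size hpm) (G_perm _ _ _ hpm) -(@FW q q) //; last first.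
  apply/allP => x; rewrite -(perm_mem hpm) mem_filter => /andP[_ /mapP [z _ ->]].
  exact: ltn_pmod.
rewrite hsz WP hzc -bin_ffact.
case: eqP => mu0.
  move: hsp; rewrite hzc mu0 addn0 => ->.
  by rewrite bin_small // mul0n !muln0.
rewrite mul1n; ring.
Qed.

Lemma rj0_le q l : 0 < q -> Wq q (rvec q l) != [::] -> rj q l 0 <= (size l).-1.
Proof.
move=> q0 hW.
have hpm := pm l q0.
have hzc : zc q (map (fun x => x %% q) l) = rj q l 0.
  rewrite /zc /rj count_map; apply: eq_count => x /=.
  by rewrite /dvdn modn_mod.
have hsp : zc q (map (fun x => x %% q) l) + size (mu_of q (rvec q l)) = size l.
  by rewrite -(perm_size hpm) zc_sp size_map.
have : 0 < size (mu_of q (rvec q l)).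
  move: hW; rewrite /Wq; case: (mu_of q (rvec q l)) => //.
rewrite -hzc; move: hsp.
move: (zc _ _) (size (mu_of _ _)) => a b; lia.
Qed.

Import GRing.Theory Num.Theory.

Theorem proposition1 (q : nat) (l : seq nat) :
  0 < q -> is_partition l ->
  ((cq q l)%:R : rat) =
    ((size (Wq q (rvec q l)))%:R
    * (\prod_(0 <= i < q) (rj q l i)`!)%:R
    / (\prod_(1 <= s < (sumn l).+1) (nmult l s)`!)%:R
    * ('C((size l).-1, rj q l 0))%:R)%R
  /\ (cq q l != 0 <-> Wq q (rvec q l) != [::]).
Proof.
move=> q0 lp; have K := key q0 lp.
have D0 : 0 < \prod_(1 <= s < (sumn l).+1) (nmult l s)`!.
  by apply: prodn_gt0 => i; exact: fact_gt0.
have P0 : 0 < \prod_(0 <= i < q) (rj q l i)`!.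
  by apply: prodn_gt0 => i; exact: fact_gt0.
split.
  have DR : ((\prod_(1 <= s < (sumn l).+1) (nmult l s)`!)%:R : rat) != 0%R.
    by rewrite pnatr_eq0 -lt0n.
  apply: (mulIf DR); rewrite -[LHS]natrM K !natrM.
  by rewrite [X in _ = X]mulrAC divfK.
split.
  move=> hA; apply/eqP => hW; move: K; rewrite hW /= !mul0n => /eqP.
  by rewrite muln_eq0 (negbTE hA) /= => /eqP D00; move: D0; rewrite D00.
move=> hW; apply/eqP => hA; move: K; rewrite hA mul0n => /esym/eqP.
have h1 : (size (Wq q (rvec q l)) == 0) = false by rewrite size_eq0 (negbTE hW).
have h2 : (\prod_(0 <= i < q) (rj q l i)`! == 0) = false by apply/negbTE; rewrite -lt0n.
have h3 : ('C((size l).-1, rj q l 0) == 0) = false.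
  by apply/negbTE; rewrite -lt0n bin_gt0 (rj0_le q0 hW).
by rewrite !muln_eq0 h1 h2 h3.
Qed.
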